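(* Consider a one-site PTM cascade with $n\ge1$ layers, with all rate constants and the total amounts $\overline{F}_i,\overline{S}_i$ ($i=1,\dots,n$) positive and fixed. Let $r(s)=f_0(s)+f_1^Y(s)$, written in reduced form $r=r_1/r_2$ with $r_1,r_2\in\mathbb{R}[s]$ (these depend only on the rate constants and on $\overline{F}_i,\overline{S}_i$, not on $\overline{E}$). Let $\sigma_n=\beta_0$ be the smallest positive real zero of $r_2$. Then $r$ is continuous and strictly increasing on $[0,\sigma_n)$, with $r(0)=0$ and $r(s)\to+\infty$ as $s\to\sigma_n^-$, and for every $\overline{E}>0$ the BMSS value of $S_n^1$ is the unique $s\in[0,\sigma_n)$ with $r(s)=\overline{E}$. Thus the stimulus-response map $\overline{E}\mapsto S_n^1$ is the inverse of $r|_{[0,\sigma_n)}$.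
   Context: A one-site PTM cascade with $n$ layers has species $E=S_0^1$ and, for $i=1,\dots,n$, $S_i^0,S_i^1,F_i,Y_i^0,Y_i^1$, with reactions $S_{i-1}^1+S_i^0 \rightleftharpoons Y_i^0 \to S_{i-1}^1+S_i^1$ (rate constants $a_i^0,b_i^0,c_i^0$) and $F_i+S_i^1\rightleftharpoons Y_i^1\to F_i+S_i^0$ (rate constants $a_i^1,b_i^1,c_i^1$), all positive, mass-action kinetics. Put $\delta_i=a_i^1/(b_i^1+c_i^1)$, $\gamma_i=(c_i^1/c_i^0)\delta_i$, $\lambda_i=\frac{b_i^0+c_i^0}{a_i^0}\gamma_i$. Given total amounts $\overline{E},\overline{F}_i,\overline{S}_i$, a steady state is a real solution of: $Y_i^0=\gamma_iF_iS_i^1$, $Y_i^1=\delta_iF_iS_i^1$, $\lambda_iF_iS_i^1=S_i^0S_{i-1}^1$, $\overline{F}_i=F_i+Y_i^1$, $\overline{S}_i=S_i^0+S_i^1+Y_i^0+Y_i^1+Y_{i+1}^0$ ($i=1,\dots,n$, $Y_{n+1}^0:=0$), $\overline{E}=E+Y_1^0$. A BMSS is a steady state with positive total amounts and all concentrations nonnegative. Define $d_i(x,y)=(\overline{S}_i-y)-x-\overline{F}_i(\delta_i+\gamma_i)x+\delta_i(\overline{S}_i-y)x-\delta_ix^2$ and $g_i^Y(x)=\frac{\gamma_i\overline{F}_ix}{1+\delta_ix}$; define rational functions of $s$ recursively by $f_n(s)=s$, $f_{n+1}^Y(s)=0$, and for $i=n,\dots,1$: $f_i^Y(s)=g_i^Y(f_i(s))$,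 $f_{i-1}(s)=\frac{\lambda_i\overline{F}_if_i(s)}{d_i(f_i(s),f_{i+1}^Y(s))}$. $\beta_0$ denotes the smallest positive singularity of $f_0$. *)

(* Defs.v *)
From Stdlib Require Import Reals List.
Open Scope R_scope.

Fixpoint Peval (p : list R) (x : R) : R :=
  match p with
  | nil => 0
  | c :: q => c + x * Peval q x
  end.

(* r1, r2 coprime in R[s]: Bezout identity (polynomial identities over R are
   equivalent to identities of the polynomial functions). *)
Definition Pcoprime (r1 r2 : list R) : Prop :=
  exists u v : list R, forall x, Peval u x * Peval r1 x + Peval v x * Peval r2 x = 1.

(* f is the rational function r1/r2 written in reduced form:
   r2 is not the zero polynomial, r1 r2 coprime, and f agrees with r1/r2
   outside a finite set of points (where pointwise evaluation may hit a
   vanishing intermediate denominator or a pole). *)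
Definition reduced_form (f : R -> R) (r1 r2 : list R) : Prop :=
  (exists x, Peval r2 x <> 0) /\ Pcoprime r1 r2 /\
  exists L : list R, forall s, ~ In s L -> f s = Peval r1 s / Peval r2 s.

Section Cascade.
Variables (a0 b0 c0 a1 b1 c1 Fbar Sbar : nat -> R).

Definition delta (i : nat) : R := a1 i / (b1 i + c1 i).
Definition gamma (i : nat) : R := (c1 i / c0 i) * delta i.
Definition lambda (i : nat) : R := (b0 i + c0 i) / a0 i * gamma i.

Definition dfun (i : nat) (x y : R) : R :=
  (Sbar i - y) - x - Fbar i * (delta i + gamma i) * x
  + delta i * (Sbar i - y) * x - delta i * x ^ 2.

Definition gY (i : nat) (x : R) : R := gamma i * Fbar i * x / (1 + delta i * x).

(* casc n s k = (f_{n-k}(s), f^Y_{n-k+1}(s)), for k <= n. *)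
Fixpoint casc (n : nat) (s : R) (k : nat) : R * R :=
  match k with
  | O => (s, 0)
  | S k' =>
      let (x, y) := casc n s k' in
      let i := (n - k')%nat in
      (lambda i * Fbar i * x / dfun i x y, gY i x)
  end.

Definition rfun (n : nat) (s : R) : R := fst (casc n s n) + snd (casc n s n).

(* Biologically meaningful steady state.  Species: E = S1 0, and for
   i = 1..n: S0 i, S1 i, F i, Y0 i, Y1 i (S_i^0, S_i^1, F_i, Y_i^0, Y_i^1). *)
Definition BMSS (n : nat) (Ebar : R) (S0 S1 F Y0 Y1 : nat -> R) : Prop :=
  0 <= S1 O /\
  (forall i, (1 <= i <= n)%nat ->
     0 <= S0 i /\ 0 <= S1 i /\ 0 <= F i /\ 0 <= Y0 i /\ 0 <= Y1 i) /\
  (forall i, (1 <= i <= n)%nat ->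
     Y0 i = gamma i * F i * S1 i /\
     Y1 i = delta i * F i * S1 i /\
     lambda i * F i * S1 i = S0 i * S1 (i - 1)%nat /\
     Fbar i = F i + Y1 i /\
     Sbar i = S0 i + S1 i + Y0 i + Y1 i + (if Nat.eqb i n then 0 else Y0 (S i))) /\
  Ebar = S1 O + Y0 1%nat.

End Cascade.

(* Main.v *)
Require Import Defs.
From Stdlib Require Import Reals Lra Lia List Classical.
Open Scope R_scope.

Lemma lim_ext (f g : R -> R) (D : R -> Prop) l x0 :
  (forall x, D x -> f x = g x) -> limit1_in f D l x0 -> limit1_in g D l x0.
Proof.
  intros H L eps He. destruct (L eps He) as [a [Ha Hx]].
  exists a; split; auto. intros x [Dx Hd]. rewrite <- (H x Dx). apply Hx; auto.
Qed.

Lemma lim_sub (f : R -> R) (D D' : R -> Prop) l x0 :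
  (forall x, D' x -> D x) -> limit1_in f D l x0 -> limit1_in f D' l x0.
Proof.
  intros H L eps He. destruct (L eps He) as [a [Ha Hx]].
  exists a; split; auto. intros x [Dx Hd]. apply Hx; auto.
Qed.

Lemma lim_id (D : R -> Prop) x0 : limit1_in (fun x => x) D x0 x0.
Proof.
  intros eps He. exists eps; split; auto. intros x [Dx Hd]. exact Hd.
Qed.

Lemma lim_const (D : R -> Prop) c x0 : limit1_in (fun _ => c) D c x0.
Proof.
  intros eps He. exists 1; split; [lra|]. intros x [Dx Hd]. simpl. unfold R_dist.
  replace (c - c) with 0 by ring. rewrite Rabs_R0; lra.
Qed.

Lemma lim_eps (f : R -> R) D l x0 : limit1_in f D l x0 ->
  forall eps, 0 < eps -> exists a, 0 < a /\ forall x, D x -> Rabs (x - x0) < a -> Rabs (f x - l) < eps.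
Proof.
  intros L eps He. destruct (L eps He) as [a [Ha Hx]]. exists a; split; auto.
  intros x Dx Hd. apply (Hx x). split; auto.
Qed.

Lemma cont_eps (f : R -> R) x0 : continuity_pt f x0 ->
  forall eps, 0 < eps -> exists a, 0 < a /\ forall x, Rabs (x - x0) < a -> Rabs (f x - f x0) < eps.
Proof.
  intros L eps He. destruct (L eps He) as [a [Ha Hx]]. exists a; split; auto.
  intros x Hd. destruct (Req_dec x0 x) as [<-|Hne].
  - replace (f x0 - f x0) with 0 by ring. rewrite Rabs_R0; lra.
  - apply (Hx x). split; [split; [exact I|auto]|]. exact Hd.
Qed.

Lemma avoid (L : list R) : forall a b, a < b -> exists x, a < x < b /\ ~ In x L.
Proof.
  induction L as [|l L IH]; intros a b Hab.
  - exists ((a+b)/2); split; [lra|simpl; auto].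
  - destruct (Rlt_dec a l) as [H1|H1]; destruct (Rlt_dec l b) as [H2|H2].
    + destruct (IH a l H1) as [x [Hx Hn]]. exists x; split; [lra|].
      simpl; intros [E|E]; [lra|auto].
    + destruct (IH a b Hab) as [x [Hx Hn]]. exists x; split; [lra|].
      simpl; intros [E|E]; [lra|auto].
    + destruct (IH a b Hab) as [x [Hx Hn]]. exists x; split; [lra|].
      simpl; intros [E|E]; [lra|auto].
    + destruct (IH a b Hab) as [x [Hx Hn]]. exists x; split; [lra|].
      simpl; intros [E|E]; [lra|auto].
Qed.

Lemma Peval_cont (p : list R) x : continuity_pt (Peval p) x.
Proof.
  induction p as [|c q IH].
  - simpl. apply continuity_pt_const. intros u v; reflexivity.
  - change (Peval (c :: q)) with (fun x => c + x * Peval q x).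
    apply (continuity_pt_plus (fun _ => c) (fun x => x * Peval q x)).
    + apply continuity_pt_const. intros u v; reflexivity.
    + apply (continuity_pt_mult (fun x => x) (Peval q)); auto.
      apply derivable_continuous_pt, derivable_pt_id.
Qed.

Definition Dg (S dd K x y : R) : R :=
  S - y - x - K * x + dd * (S - y) * x - dd * x ^ 2.

Lemma Dg_mono S dd K x1 x2 y1 y2 :
  0 < dd -> 0 <= K -> 0 < x1 -> x1 < x2 -> 0 <= y1 -> y1 <= y2 ->
  0 <= Dg S dd K x2 y2 -> x1 * Dg S dd K x2 y2 < x2 * Dg S dd K x1 y1.
Proof.
  unfold Dg; intros Hd HK H1 H12 Hy1 Hy12 HD.
  assert (HS : 0 < S - y2).
  { destruct (Rlt_dec 0 (S - y2)) as [h|h]; [exact h|].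
    assert (0 <= K * x2) by nra. assert (0 < dd * x2) by nra.
    assert (0 < dd * x2 ^ 2) by (simpl; nra).
    assert ((S - y2) * (dd * x2) <= 0) by nra. nra. }
  assert (E : x2 * (S - y1 - x1 - K * x1 + dd * (S - y1) * x1 - dd * x1 ^ 2)
              - x1 * (S - y2 - x2 - K * x2 + dd * (S - y2) * x2 - dd * x2 ^ 2)
            = (S - y2) * (x2 - x1) + x2 * (y2 - y1) + dd * x1 * x2 * (y2 - y1)
              + dd * x1 * x2 * (x2 - x1)) by ring.
  assert (0 < (S - y2) * (x2 - x1)) by nra.
  assert (0 <= x2 * (y2 - y1)) by nra.
  assert (0 <= dd * x1 * x2 * (y2 - y1)).
  { apply Rmult_le_pos; [|lra]. assert (0 < dd * x1) by nra. nra. }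
  assert (0 < dd * x1 * x2 * (x2 - x1)).
  { assert (0 < dd * x1) by nra. assert (0 < dd * x1 * x2) by nra. nra. }
  lra.
Qed.

Lemma Dg_neg S dd K x y :
  0 < S -> 0 < dd -> 0 <= K -> 0 <= y -> S + 1 < x -> Dg S dd K x y < 0.
Proof.
  unfold Dg; intros HS Hd HK Hy Hx.
  assert (0 <= K * x) by nra.
  assert (0 <= dd * y * x) by (apply Rmult_le_pos; nra).
  assert (dd * x * (S - x) < 0).
  { assert (0 < dd * x) by nra. nra. }
  nra.
Qed.

Lemma frac_lt c a b x y : 0 < c -> 0 < a -> 0 < b -> x * b < y * a -> c * x / a < c * y / b.
Proof.
  intros Hc Ha Hb H. unfold Rdiv.
  apply Rmult_lt_reg_r with (a * b); [nra|].
  replace (c * x * / a * (a * b)) with (c * (x * b)) by (field; lra).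
  replace (c * y * / b * (a * b)) with (c * (y * a)) by (field; lra).
  nra.
Qed.

Lemma gfun_mono c dd x1 x2 : 0 < c -> 0 < dd -> 0 <= x1 -> x1 <= x2 ->
  c * x1 / (1 + dd * x1) <= c * x2 / (1 + dd * x2).
Proof.
  intros Hc Hd H1 H2. destruct (Req_dec x1 x2) as [<-|Hne]; [lra|].
  left. apply frac_lt; try nra.
Qed.

Lemma gfun_pos c dd x : 0 < c -> 0 < dd -> 0 <= x -> 0 <= c * x / (1 + dd * x).
Proof.
  intros Hc Hd Hx. unfold Rdiv. apply Rmult_le_pos; [nra|].
  left; apply Rinv_0_lt_compat; nra.
Qed.

Lemma lim_Dg (x y : R -> R) D s S dd K :
  limit1_in x D (x s) s -> limit1_in y D (y s) s ->
  limit1_in (fun t => Dg S dd K (x t) (y t)) D (Dg S dd K (x s) (y s)) s.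
Proof.
  intros Hx Hy.
  replace (Dg S dd K (x s) (y s)) with
    (S - y s - x s - K * x s + dd * (S - y s) * x s - dd * (x s * x s)) by (unfold Dg; ring).
  apply lim_ext with (f := fun t => S - y t - x t - K * x t + dd * (S - y t) * x t - dd * (x t * x t)).
  { intros t _; unfold Dg; ring. }
  apply limit_minus; [apply limit_plus; [apply limit_minus; [apply limit_minus;
    [apply limit_minus|]|]|]|].
  - apply lim_const.
  - exact Hy.
  - exact Hx.
  - apply limit_mul; [apply lim_const|exact Hx].
  - apply limit_mul; [apply limit_mul; [apply lim_const|apply limit_minus; [apply lim_const|exact Hy]]|exact Hx].
  - apply limit_mul; [apply lim_const|apply limit_mul; exact Hx].
Qed.

Section Casc.
Variables a0 b0 c0 a1 b1 c1 Fbar Sbar : nat -> R.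
Variable n : nat.
Hypothesis Hpos : forall i, (1 <= i <= n)%nat ->
     0 < a0 i /\ 0 < b0 i /\ 0 < c0 i /\ 0 < a1 i /\ 0 < b1 i /\ 0 < c1 i /\
     0 < Fbar i /\ 0 < Sbar i.

Notation dl := (delta a1 b1 c1).
Notation gm := (gamma c0 a1 b1 c1).
Notation lm := (lambda a0 b0 c0 a1 b1 c1).
Notation dF := (dfun c0 a1 b1 c1 Fbar Sbar).
Notation gYf := (gY c0 a1 b1 c1 Fbar).

Lemma par_pos i : (1 <= i <= n)%nat ->
  0 < dl i /\ 0 < gm i /\ 0 < lm i /\ 0 < Fbar i /\ 0 < Sbar i.
Proof.
  intros Hi; destruct (Hpos i Hi) as (h1&h2&h3&h4&h5&h6&h7&h8).
  assert (0 < dl i) by (unfold delta; apply Rdiv_lt_0_compat; lra).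
  assert (0 < gm i) by (unfold gamma; apply Rmult_lt_0_compat; auto; apply Rdiv_lt_0_compat; lra).
  repeat split; auto.
  unfold lambda. apply Rmult_lt_0_compat; auto. apply Rdiv_lt_0_compat; lra.
Qed.

Lemma dF_Dg i x y : dF i x y = Dg (Sbar i) (dl i) (Fbar i * (dl i + gm i)) x y.
Proof. reflexivity. Qed.

Definition xk k s := fst (casc a0 b0 c0 a1 b1 c1 Fbar Sbar n s k).
Definition yk k s := snd (casc a0 b0 c0 a1 b1 c1 Fbar Sbar n s k).

Lemma xk_0 s : xk 0 s = s. Proof. reflexivity. Qed.
Lemma yk_0 s : yk 0 s = 0. Proof. reflexivity. Qed.
Lemma casc_S k s : casc a0 b0 c0 a1 b1 c1 Fbar Sbar n s (S k) =
  (lm (n - k) * Fbar (n - k) * xk k s / dF (n - k) (xk k s) (yk k s), gYf (n - k) (xk k s)).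
Proof. unfold xk, yk. simpl. destruct (casc a0 b0 c0 a1 b1 c1 Fbar Sbar n s k); reflexivity. Qed.
Lemma xk_S k s : xk (S k) s = lm (n - k) * Fbar (n - k) * xk k s / dF (n - k) (xk k s) (yk k s).
Proof. unfold xk at 1. rewrite casc_S. reflexivity. Qed.
Lemma yk_S k s : yk (S k) s = gYf (n - k) (xk k s).
Proof. unfold yk at 1. rewrite casc_S. reflexivity. Qed.

Fixpoint Dom k s : Prop :=
  match k with
  | O => 0 <= s
  | S k => Dom k s /\ 0 < dF (n - k) (xk k s) (yk k s)
  end.

Lemma Dom_nonneg k s : Dom k s -> 0 <= s.
Proof. induction k; simpl; tauto. Qed.

Lemma Dom_le k j s : (j <= k)%nat -> Dom k s -> Dom j s.
Proof.
  induction 1; auto. simpl; tauto.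
Qed.

Definition Inv k :=
  Dom k 0 /\ xk k 0 = 0 /\ yk k 0 = 0 /\
  (forall s t, Dom k t -> 0 <= s <= t -> Dom k s) /\
  (forall s, Dom k s -> exists t, s < t /\ Dom k t) /\
  (forall s t, Dom k s -> Dom k t -> s < t -> xk k s < xk k t) /\
  (forall s t, Dom k s -> Dom k t -> s <= t -> yk k s <= yk k t) /\
  (forall s, Dom k s -> 0 <= yk k s) /\
  (forall s, Dom k s -> limit1_in (xk k) (Dom k) (xk k s) s /\
                       limit1_in (yk k) (Dom k) (yk k s) s) /\
  (forall M, exists s, Dom k s /\ M < xk k s).

Lemma Inv0 : Inv 0.
Proof.
  unfold Inv; simpl. repeat split.
  - lra.
  - intros s t _ H; lra.
  - intros s Hs; exists (s + 1); lra.
  - intros s t _ _ H; rewrite !xk_0; lra.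
  - intros s t _ _ _; rewrite !yk_0; lra.
  - intros s _; rewrite yk_0; lra.
  - apply lim_ext with (f := fun x => x). { intros; reflexivity. } apply lim_id.
  - apply lim_ext with (f := fun _ => 0). { intros; reflexivity. } apply lim_const.
  - intros M; exists (Rabs M + 1); split; rewrite ?xk_0;
    pose proof (Rle_abs M); pose proof (Rabs_pos M); lra.
Qed.

Lemma Inv_x_nonneg k s : Inv k -> Dom k s -> 0 <= xk k s.
Proof.
  intros (D0&X0&_&_&_&Xinc&_) Ds. destruct (Rle_lt_or_eq_dec 0 s (Dom_nonneg k s Ds)) as [h|h].
  - rewrite <- X0. left; apply Xinc; auto.
  - subst; lra.
Qed.

Lemma Inv_x_pos k s : Inv k -> Dom k s -> 0 < s -> 0 < xk k s.
Proof.
  intros (D0&X0&_&_&_&Xinc&_) Ds h. rewrite <- X0. apply Xinc; auto.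
Qed.


Lemma Inv_step k : (k < n)%nat -> Inv k ->
  Inv (S k) /\ exists beta, 0 < beta /\ (forall s, Dom (S k) s <-> 0 <= s < beta).
Proof.
  intros Hk HI. pose proof HI as HI'.
  destruct HI as (D0&X0&Y0&Ddown&Dopen&Xinc&Yinc&Ypos&Cont&Unb).
  set (i := (n - k)%nat).
  assert (Hi : (1 <= i <= n)%nat) by (unfold i; lia).
  destruct (par_pos i Hi) as (Hdl&Hgm&Hlm&HF&HS).
  pose (K := Fbar i * (dl i + gm i)).
  assert (HK : 0 <= K) by (unfold K; nra).
  pose (d := fun s => dF i (xk k s) (yk k s)).
  assert (DS : forall s, Dom (S k) s <-> Dom k s /\ 0 < d s) by (intros; simpl; tauto).
  assert (d0 : d 0 = Sbar i) by (unfold d; rewrite X0, Y0; unfold dfun; ring).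
  assert (dcont : forall s, Dom k s -> limit1_in d (Dom k) (d s) s).
  { intros s Ds. unfold d. destruct (Cont s Ds) as [Cx Cy].
    apply lim_ext with (f := fun t => Dg (Sbar i) (dl i) K (xk k t) (yk k t)).
    { intros; reflexivity. }
    apply lim_Dg; auto. }
  assert (dmono : forall s t, Dom k s -> Dom k t -> 0 < s -> s < t -> 0 <= d t ->
             0 < d s /\ xk k s * d t < xk k t * d s).
  { intros s t Ds Dt h1 h2 h3.
    pose proof (Inv_x_pos k s HI' Ds h1) as xs.
    pose proof (Xinc s t Ds Dt h2) as xst.
    pose proof (Yinc s t Ds Dt (Rlt_le _ _ h2)) as yst.
    pose proof (Ypos s Ds) as ys.
    unfold d in *. rewrite !dF_Dg in *.
    pose proof (Dg_mono (Sbar i) (dl i) K (xk k s) (xk k t) (yk k s) (yk k t) Hdl HK xs xst ys yst h3) as M.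
    unfold K in M. split; [|exact M].
    assert (0 <= xk k s * Dg (Sbar i) (dl i) (Fbar i * (dl i + gm i)) (xk k t) (yk k t)) by
      (apply Rmult_le_pos; lra).
    nra. }
  assert (Edown : forall s t, Dom (S k) t -> 0 <= s <= t -> Dom (S k) s).
  { intros s t Dt Hst. rewrite DS in *. destruct Dt as [Dt dt].
    assert (Ds : Dom k s) by (apply Ddown with t; auto). split; auto.
    destruct (Rle_lt_or_eq_dec 0 s (proj1 Hst)) as [h|h].
    - destruct (Rle_lt_or_eq_dec s t (proj2 Hst)) as [h'|h'].
      + apply (dmono s t); auto; lra.
      + subst; auto.
    - subst; rewrite d0; lra. }
  destruct (Unb (Sbar i + 1)) as [t0 [Dt0 Xt0]].
  assert (dt0 : d t0 < 0).
  { unfold d; rewrite dF_Dg. apply Dg_neg; auto. }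
  assert (Ebound : forall s, Dom (S k) s -> s < t0).
  { intros s Es. destruct (Rlt_dec s t0) as [h|h]; auto.
    exfalso. assert (Dom (S k) t0) as E0.
    { apply Edown with s; auto. split; [apply (Dom_nonneg k t0 Dt0)|lra]. }
    rewrite DS in E0. lra. }
  assert (E0 : Dom (S k) 0) by (rewrite DS; split; auto; rewrite d0; lra).
  destruct (completeness (Dom (S k))) as [beta [Hub Hlub]].
  { exists t0. intros s Es. left; apply Ebound; auto. }
  { exists 0; auto. }
  assert (b0' : 0 <= beta) by (apply Hub; auto).
  assert (bt0 : beta <= t0) by (apply Hlub; intros s Es; left; apply Ebound; auto).
  assert (Db : Dom k beta) by (apply Ddown with t0; auto).
  assert (below : forall s, s < beta -> exists e, Dom (S k) e /\ s < e).
  { intros s hs. destruct (classic (exists e, Dom (S k) e /\ s < e)) as [h|h]; auto.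
    exfalso. assert (beta <= s); [|lra]. apply Hlub. intros e Ee.
    destruct (Rle_dec e s) as [h'|h']; auto. exfalso; apply h; exists e; split; auto; lra. }
  assert (dbeta : d beta = 0).
  { destruct (Rtotal_order (d beta) 0) as [h|[h|h]]; auto; exfalso.
    - destruct (lim_eps _ _ _ _ (dcont beta Db) (- d beta)) as [a [Ha Hx]]; [lra|].
      destruct (below (beta - a / 2)) as [e [Ee he]]; [lra|].
      assert (e <= beta) by (apply Hub; auto).
      rewrite DS in Ee. destruct Ee as [De de].
      specialize (Hx e De). assert (Rabs (e - beta) < a) by (rewrite Rabs_left1; lra).
      specialize (Hx H0). apply Rabs_def2 in Hx. lra.
    - destruct (lim_eps _ _ _ _ (dcont beta Db) (d beta)) as [a [Ha Hx]]; [lra|].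
      destruct (Dopen beta Db) as [t' [ht' Dt']].
      set (e := Rmin t' (beta + a / 2)).
      assert (beta < e) by (unfold e; apply Rmin_glb_lt; lra).
      assert (e <= t') by apply Rmin_l. assert (e <= beta + a/2) by apply Rmin_r.
      assert (De : Dom k e) by (apply Ddown with t'; auto; lra).
      specialize (Hx e De). assert (Rabs (e - beta) < a) by (rewrite Rabs_right; lra).
      specialize (Hx H2). apply Rabs_def2 in Hx.
      assert (Dom (S k) e) by (rewrite DS; split; auto; lra).
      assert (e <= beta) by (apply Hub; auto). lra. }
  assert (bpos : 0 < beta).
  { destruct (Rle_lt_or_eq_dec 0 beta b0') as [h|h]; auto. subst. lra. }
  assert (Echar : forall s, Dom (S k) s <-> 0 <= s < beta).
  { intros s; split.
    - intros Es. split; [apply (Dom_nonneg (S k) s Es)|].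
      assert (s <= beta) by (apply Hub; auto).
      destruct (Rle_lt_or_eq_dec s beta H) as [h|h]; auto. subst.
      rewrite DS in Es. lra.
    - intros [h1 h2]. destruct (below s h2) as [e [Ee he]]. apply Edown with e; auto; lra. }
  split; [|exists beta; split; auto].
  assert (XS : forall s, xk (S k) s = lm i * Fbar i * xk k s / d s) by (intros; rewrite xk_S; reflexivity).
  assert (YS : forall s, yk (S k) s = gm i * Fbar i * xk k s / (1 + dl i * xk k s))
    by (intros; rewrite yk_S; reflexivity).
  assert (Hc : 0 < lm i * Fbar i) by nra.
  assert (Hg : 0 < gm i * Fbar i) by nra.
  unfold Inv. split; [auto|]. split.
  { rewrite XS, X0. unfold Rdiv; ring. }
  split. { rewrite YS, X0. unfold Rdiv; ring. }
  split; [auto|].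
  split.
  { intros s Es. rewrite Echar in Es. exists ((s + beta) / 2). split; [lra|]. rewrite Echar; lra. }
  split.
  { intros s t Es Et hst. rewrite !XS.
    pose proof Es as Es'. pose proof Et as Et'.
    rewrite DS in Es, Et. destruct Es as [Ds ds]. destruct Et as [Dt dt].
    destruct (Rle_lt_or_eq_dec 0 s (Dom_nonneg k s Ds)) as [h|h].
    - destruct (dmono s t Ds Dt h hst (Rlt_le _ _ dt)) as [_ M].
      apply frac_lt; auto.
    - subst. rewrite X0. pose proof (Inv_x_pos k t HI' Dt hst).
      replace (lm i * Fbar i * 0 / d 0) with 0 by (unfold Rdiv; ring).
      unfold Rdiv. apply Rmult_lt_0_compat; [nra|]. apply Rinv_0_lt_compat; auto. }
  split.
  { intros s t Es Et hst. rewrite !YS. rewrite DS in Es, Et.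
    apply gfun_mono; auto. apply (Inv_x_nonneg k s HI'); tauto.
    destruct (Rle_lt_or_eq_dec s t hst) as [h|h]; [left; apply Xinc; tauto|subst; lra]. }
  split.
  { intros s Es. rewrite YS. rewrite DS in Es. apply gfun_pos; auto.
    apply (Inv_x_nonneg k s HI'); tauto. }
  split.
  { intros s Es. pose proof Es as Es'. rewrite DS in Es'. destruct Es' as [Ds ds].
    destruct (Cont s Ds) as [Cx Cy].
    assert (Sub : forall x, Dom (S k) x -> Dom k x) by (intros x; rewrite DS; tauto).
    split.
    - rewrite XS. apply lim_ext with (f := fun t => lm i * Fbar i * xk k t * / d t).
      { intros; rewrite XS; reflexivity. }
      unfold Rdiv. apply limit_mul; [apply limit_mul; [apply lim_const|]|].
      + apply lim_sub with (Dom k); auto.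
      + apply limit_inv; [|lra]. apply lim_sub with (Dom k); auto.
    - rewrite YS. apply lim_ext with (f := fun t => gm i * Fbar i * xk k t * / (1 + dl i * xk k t)).
      { intros; rewrite YS; reflexivity. }
      assert (0 <= xk k s) by (apply (Inv_x_nonneg k s HI' Ds)).
      unfold Rdiv. apply limit_mul; [apply limit_mul; [apply lim_const|]|].
      + apply lim_sub with (Dom k); auto.
      + apply limit_inv; [|nra]. apply limit_plus; [apply lim_const|].
        apply limit_mul; [apply lim_const|]. apply lim_sub with (Dom k); auto. }
  { intros M.
    assert (Dh : Dom k (beta / 2)) by (apply Ddown with beta; auto; lra).
    pose proof (Inv_x_pos k (beta/2) HI' Dh ltac:(lra)) as xh.
    set (c := lm i * Fbar i * xk k (beta / 2)).
    assert (hc : 0 < c) by (unfold c; nra).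
    set (eps := c / (Rabs M + 1)).
    assert (heps : 0 < eps) by (unfold eps; apply Rdiv_lt_0_compat; auto;
                                pose proof (Rabs_pos M); lra).
    destruct (lim_eps _ _ _ _ (dcont beta Db) eps heps) as [a [Ha Hx]].
    set (s := Rmax (beta / 2) (beta - a / 2)).
    assert (s1 : beta / 2 <= s) by apply Rmax_l.
    assert (s2 : beta - a / 2 <= s) by apply Rmax_r.
    assert (s3 : s < beta) by (unfold s; apply Rmax_lub_lt; lra).
    assert (Es : Dom (S k) s) by (rewrite Echar; lra).
    exists s; split; auto.
    pose proof Es as Es'. rewrite DS in Es'. destruct Es' as [Ds ds].
    specialize (Hx s Ds). assert (Rabs (s - beta) < a) by (rewrite Rabs_left; lra).
    specialize (Hx H). rewrite dbeta in Hx. apply Rabs_def2 in Hx.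
    assert (xle : xk k (beta / 2) <= xk k s).
    { destruct (Rle_lt_or_eq_dec _ _ s1) as [h|h]; [left; apply Xinc; auto|rewrite h; lra]. }
    rewrite XS.
    assert (c <= lm i * Fbar i * xk k s) by (unfold c; nra).
    assert (c / d s > Rabs M + 1).
    { apply Rmult_gt_reg_l with (d s); [lra|].
      replace (d s * (c / d s)) with c by (field; lra).
      assert (d s * (Rabs M + 1) < eps * (Rabs M + 1)) by (pose proof (Rabs_pos M); nra).
      unfold eps in H1. replace (c / (Rabs M + 1) * (Rabs M + 1)) with c in H1
        by (field; pose proof (Rabs_pos M); lra). lra. }
    assert (c / d s <= lm i * Fbar i * xk k s / d s).
    { unfold Rdiv. apply Rmult_le_compat_r; auto. left; apply Rinv_0_lt_compat; lra. }
    pose proof (Rle_abs M). lra. }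
Qed.

Lemma Inv_all k : (k <= n)%nat -> Inv k.
Proof.
  induction k; intros Hk. apply Inv0. apply Inv_step; [lia|]. apply IHk; lia.
Qed.

Lemma sigma_ex : (1 <= n)%nat -> exists sigma, 0 < sigma /\ forall s, Dom n s <-> 0 <= s < sigma.
Proof.
  intros Hn. destruct (Inv_step (n - 1)) as [_ [b [hb Hb]]]; [lia| apply Inv_all; lia|].
  replace (S (n - 1)) with n in Hb by lia. exists b; auto.
Qed.

Lemma rfun_eq s : rfun a0 b0 c0 a1 b1 c1 Fbar Sbar n s = xk n s + yk n s.
Proof. reflexivity. Qed.

Lemma rfun_props :
  rfun a0 b0 c0 a1 b1 c1 Fbar Sbar n 0 = 0 /\
  (forall s t, Dom n s -> Dom n t -> s < t ->
     rfun a0 b0 c0 a1 b1 c1 Fbar Sbar n s < rfun a0 b0 c0 a1 b1 c1 Fbar Sbar n t) /\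
  (forall s, Dom n s -> limit1_in (rfun a0 b0 c0 a1 b1 c1 Fbar Sbar n) (Dom n)
                         (rfun a0 b0 c0 a1 b1 c1 Fbar Sbar n s) s) /\
  (forall M, exists s, Dom n s /\ M < rfun a0 b0 c0 a1 b1 c1 Fbar Sbar n s).
Proof.
  destruct (Inv_all n (le_n n)) as (D0&X0&Y0&Ddown&Dopen&Xinc&Yinc&Ypos&Cont&Unb).
  split; [rewrite rfun_eq, X0, Y0; ring|].
  split.
  { intros s t Ds Dt h. rewrite !rfun_eq. pose proof (Xinc s t Ds Dt h).
    pose proof (Yinc s t Ds Dt (Rlt_le _ _ h)). lra. }
  split.
  { intros s Ds. destruct (Cont s Ds) as [Cx Cy].
    apply lim_ext with (f := fun t => xk n t + yk n t). { intros; reflexivity. }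
    apply limit_plus; auto. }
  intros M. destruct (Unb M) as [s [Ds Hs]]. exists s; split; auto.
  rewrite rfun_eq. pose proof (Ypos s Ds). lra.
Qed.

Lemma gY_Y0 i x : (1 <= i <= n)%nat -> 0 <= x ->
  gYf i x = gm i * (Fbar i / (1 + dl i * x)) * x.
Proof.
  intros Hi Hx. destruct (par_pos i Hi) as (Hdl&_). unfold gY. field. nra.
Qed.

Lemma bmss_from (Hn : (1 <= n)%nat) Ebar s :
  Dom n s -> rfun a0 b0 c0 a1 b1 c1 Fbar Sbar n s = Ebar ->
  exists S0 S1 F Y0 Y1 : nat -> R,
    BMSS a0 b0 c0 a1 b1 c1 Fbar Sbar n Ebar S0 S1 F Y0 Y1 /\ S1 n = s.
Proof.
  intros Ds Hr.
  pose (S1f := fun i : nat => xk (n - i) s).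
  pose (Ff := fun i => Fbar i / (1 + dl i * S1f i)).
  pose (Y0f := fun i => gm i * Ff i * S1f i).
  pose (Y1f := fun i => dl i * Ff i * S1f i).
  pose (yv := fun i => if Nat.eqb i n then 0 else Y0f (S i)).
  pose (S0f := fun i => Sbar i - S1f i - Y0f i - Y1f i - yv i).
  exists S0f, S1f, Ff, Y0f, Y1f.
  assert (Dk : forall k, (k <= n)%nat -> Dom k s) by (intros k hk; apply Dom_le with n; auto).
  assert (xnn : forall k, (k <= n)%nat -> 0 <= xk k s)
    by (intros k hk; apply Inv_x_nonneg; [apply Inv_all; auto|auto]).
  assert (Hlay : forall i, (1 <= i <= n)%nat ->
     0 <= S1f i /\ 0 < Ff i /\ S1f (i - 1)%nat = lm i * Fbar i * S1f i / dF i (S1f i) (yv i) /\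
     0 < dF i (S1f i) (yv i)).
  { intros i Hi. destruct (par_pos i Hi) as (Hdl&Hgm&Hlm&HF&HS).
    assert (hx : 0 <= S1f i) by (apply xnn; lia).
    assert (hyv : yk (n - i) s = yv i).
    { unfold yv. destruct (Nat.eqb_spec i n) as [e|e].
      - subst. rewrite Nat.sub_diag. reflexivity.
      - replace (n - i)%nat with (S (n - S i)) by lia. rewrite yk_S.
        replace (n - (n - S i))%nat with (S i) by lia.
        unfold Y0f, Ff, S1f. apply gY_Y0; [lia|]. apply xnn; lia. }
    assert (Dd : Dom (S (n - i)) s) by (apply Dk; lia).
    simpl in Dd. destruct Dd as [_ Dd]. replace (n - (n - i))%nat with i in Dd by lia.
    rewrite hyv in Dd. fold (S1f i) in Dd.
    split; [auto|]. split. { unfold Ff. apply Rdiv_lt_0_compat; nra. }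
    split; [|auto].
    unfold S1f at 1. replace (n - (i - 1))%nat with (S (n - i)) by lia.
    rewrite xk_S. replace (n - (n - i))%nat with i by lia. rewrite hyv. reflexivity. }
  split.
  2:{ unfold S1f. rewrite Nat.sub_diag. reflexivity. }
  unfold BMSS. split; [|split; [|split]].
  - unfold S1f. apply xnn. lia.
  - intros i Hi. destruct (Hlay i Hi) as (hx&hF&_&hd).
    destruct (par_pos i Hi) as (Hdl&Hgm&Hlm&HF&HS).
    split; [|split; [exact hx|split; [left; exact hF|split]]].
    + unfold S0f, yv, Y0f, Y1f.
      assert (E : Sbar i - S1f i - gm i * Ff i * S1f i - dl i * Ff i * S1f i -
                  (if Nat.eqb i n then 0 else gm (S i) * Ff (S i) * S1f (S i))
                = dF i (S1f i) (yv i) / (1 + dl i * S1f i)).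
      { unfold yv, Y0f, Ff. unfold dfun. field. nra. }
      rewrite E. unfold Rdiv. apply Rmult_le_pos; [lra|]. left; apply Rinv_0_lt_compat; nra.
    + unfold Y0f. apply Rmult_le_pos; [nra|auto].
    + unfold Y1f. apply Rmult_le_pos; [nra|auto].
  - intros i Hi. destruct (Hlay i Hi) as (hx&hF&hprev&hd).
    destruct (par_pos i Hi) as (Hdl&Hgm&Hlm&HF&HS).
    split; [reflexivity|]. split; [reflexivity|]. split; [|split].
    + rewrite hprev.
      assert (E : S0f i = dF i (S1f i) (yv i) / (1 + dl i * S1f i)).
      { unfold S0f, yv, Y0f, Y1f, Ff. unfold dfun. field. nra. }
      rewrite E. unfold Ff. field. split; nra.
    + unfold Y1f, Ff. field. nra.
    + unfold S0f, yv. ring.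
  - rewrite <- Hr. rewrite rfun_eq. unfold S1f. rewrite Nat.sub_0_r.
    replace (yk n s) with (yk (S (n - 1)) s) by (f_equal; lia).
    rewrite yk_S. replace (n - (n - 1))%nat with 1%nat by lia.
    unfold Y0f, Ff, S1f. rewrite gY_Y0; [|lia|apply xnn; lia]. reflexivity.
Qed.

Lemma bmss_to (Hn : (1 <= n)%nat) Ebar (HE : 0 < Ebar) S0 S1 F Y0 Y1 :
  BMSS a0 b0 c0 a1 b1 c1 Fbar Sbar n Ebar S0 S1 F Y0 Y1 ->
  Dom n (S1 n) /\ rfun a0 b0 c0 a1 b1 c1 Fbar Sbar n (S1 n) = Ebar.
Proof.
  intros (HE0&Hnn&Heq&HEb).
  pose (yv := fun i => if Nat.eqb i n then 0 else Y0 (S i)).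
  assert (Lay : forall i, (1 <= i <= n)%nat ->
    F i * (1 + dl i * S1 i) = Fbar i /\
    S0 i * (1 + dl i * S1 i) = dF i (S1 i) (yv i) /\
    lm i * Fbar i * S1 i = dF i (S1 i) (yv i) * S1 (i - 1)%nat /\
    0 < F i /\ Y0 i = gm i * F i * S1 i).
  { intros i Hi. destruct (Heq i Hi) as (e0&e1&e2&e3&e4).
    destruct (Hnn i Hi) as (p0&p1&p2&p3&p4).
    destruct (par_pos i Hi) as (Hdl&Hgm&Hlm&HF&HS).
    assert (f1 : F i * (1 + dl i * S1 i) = Fbar i) by (rewrite e3, e1; ring).
    assert (f2 : S0 i * (1 + dl i * S1 i) = dF i (S1 i) (yv i)).
    { unfold dfun, yv. rewrite e4, e3, e0, e1. ring. }
    split; [auto|]. split; [auto|]. split.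
    - rewrite <- f1, <- f2.
      replace (lm i * (F i * (1 + dl i * S1 i)) * S1 i) with
        (lm i * F i * S1 i * (1 + dl i * S1 i)) by ring.
      rewrite e2. ring.
    - split; [|auto]. destruct p2 as [p2|p2]; auto. rewrite <- p2 in f1. lra. }
  assert (up : forall i, (1 <= i <= n)%nat -> S1 (i - 1)%nat = 0 -> S1 i = 0).
  { intros i Hi h. destruct (Lay i Hi) as (_&_&_&hF&_). destruct (Heq i Hi) as (_&_&e2&_).
    destruct (par_pos i Hi) as (_&_&Hlm&_).
    rewrite h, Rmult_0_r in e2. apply Rmult_integral in e2. destruct e2 as [e|e]; auto.
    exfalso. assert (0 < lm i * F i) by nra. lra. }
  assert (toN : forall m j, (j + m = n)%nat -> S1 j = 0 -> S1 n = 0).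
  { induction m; intros j hj h.
    - replace n with j by lia. auto.
    - apply (IHm (S j)); [lia|]. apply up; [lia|]. replace (S j - 1)%nat with j by lia. auto. }
  assert (nn : forall j, (j <= n)%nat -> 0 <= S1 j).
  { intros j hj. destruct j; auto. destruct (Hnn (S j)) as (_&p&_); [lia|auto]. }
  assert (Snpos : 0 < S1 n).
  { destruct (nn n (le_n n)) as [h|h]; auto. exfalso.
    assert (Q : forall m, (m <= n)%nat -> S1 (n - m)%nat = 0 /\ yv (n - m)%nat = 0).
    { induction m; intros hm.
      - rewrite Nat.sub_0_r. split; auto. unfold yv. rewrite Nat.eqb_refl. reflexivity.
      - destruct (IHm ltac:(lia)) as [h1 h2].
        set (i := (n - m)%nat) in *.
        assert (Hi : (1 <= i <= n)%nat) by (unfold i; lia).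
        destruct (Lay i Hi) as (_&f2&f3&_&f5).
        destruct (par_pos i Hi) as (_&_&Hlm&_&HS).
        rewrite h1, h2 in f2. replace (dF i 0 0) with (Sbar i) in f2 by (unfold dfun; ring).
        rewrite h1, h2 in f3. replace (dF i 0 0) with (Sbar i) in f3 by (unfold dfun; ring).
        replace (n - S m)%nat with (i - 1)%nat by (unfold i; lia).
        split.
        + assert (Sbar i * S1 (i - 1)%nat = 0) by (rewrite <- f3; ring).
          apply Rmult_integral in H. destruct H; [lra|auto].
        + unfold yv. destruct (Nat.eqb_spec (i - 1) n) as [e|e]; [lia|].
          replace (S (i - 1)) with i by lia. rewrite f5, h1. ring. }
    destruct (Q n (le_n n)) as [q1 q2]. rewrite Nat.sub_diag in q1, q2.
    unfold yv in q2. destruct (Nat.eqb_spec 0 n) as [e|e]; [lia|]. lra. }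
  assert (allpos : forall j, (j <= n)%nat -> 0 < S1 j).
  { intros j hj. destruct (nn j hj) as [h|h]; auto. exfalso.
    assert (S1 n = 0) by (apply (toN (n - j)%nat j); [lia|auto]). lra. }
  assert (C : forall k, (k <= n)%nat ->
     xk k (S1 n) = S1 (n - k)%nat /\ yk k (S1 n) = yv (n - k)%nat /\ Dom k (S1 n)).
  { induction k; intros hk.
    - rewrite Nat.sub_0_r. split; [reflexivity|]. split.
      + rewrite yk_0. unfold yv. rewrite Nat.eqb_refl. reflexivity.
      + simpl. lra.
    - destruct (IHk ltac:(lia)) as (hx&hy&hD).
      set (i := (n - k)%nat) in *.
      assert (Hi : (1 <= i <= n)%nat) by (unfold i; lia).
      destruct (Lay i Hi) as (f1&_&f3&hF&f5).
      destruct (par_pos i Hi) as (Hdl&Hgm&Hlm&HF&HS).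
      assert (pi : 0 < S1 i) by (apply allpos; lia).
      assert (pim : 0 < S1 (i - 1)%nat) by (apply allpos; lia).
      assert (dpos : 0 < dF i (S1 i) (yv i)).
      { destruct (Rlt_dec 0 (dF i (S1 i) (yv i))) as [h|h]; auto. exfalso.
        assert (0 < lm i * Fbar i * S1 i) by (apply Rmult_lt_0_compat; nra).
        assert (dF i (S1 i) (yv i) * S1 (i - 1)%nat <= 0) by nra. lra. }
      replace (n - S k)%nat with (i - 1)%nat by (unfold i; lia).
      split; [|split].
      + rewrite xk_S. fold i. rewrite hx, hy, f3. field. lra.
      + rewrite yk_S. fold i. rewrite hx. unfold yv.
        destruct (Nat.eqb_spec (i - 1) n) as [e|e]; [lia|].
        replace (S (i - 1)) with i by lia. rewrite f5. unfold gY. rewrite <- f1. field. nra.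
      + simpl. split; auto. fold i. rewrite hx, hy. auto. }
  destruct (C n (le_n n)) as (hx&hy&hD). split; auto.
  rewrite rfun_eq, hx, hy, Nat.sub_diag. unfold yv.
  destruct (Nat.eqb_spec 0 n) as [e|e]; [lia|]. rewrite HEb. reflexivity.
Qed.

End Casc.

Lemma cont_lim (g : R -> R) D t : continuity_pt g t -> limit1_in g D (g t) t.
Proof.
  intros Hc eps He. destruct (cont_eps g t Hc eps He) as [a [Ha Hx]].
  exists a; split; auto. intros x [_ Hd]. apply Hx. exact Hd.
Qed.

Lemma poly_part (f : R -> R) (sigma : R) (r1 r2 : list R) :
  0 < sigma -> f 0 = 0 ->
  (forall s t, 0 <= s < sigma -> 0 <= t < sigma -> s < t -> f s < f t) ->
  (forall s, 0 <= s < sigma -> limit1_in f (fun x => 0 <= x < sigma) (f s) s) ->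
  (forall M, exists s, 0 <= s < sigma /\ M < f s) ->
  reduced_form f r1 r2 ->
  (forall s, 0 <= s < sigma -> Peval r2 s <> 0 /\ Peval r1 s / Peval r2 s = f s) /\
  Peval r2 sigma = 0.
Proof.
  intros Hs f0 Finc Fcont Funb [_ [[u [v Hb]] [L HL]]].
  set (D := fun x => 0 <= x < sigma).
  assert (P1 : forall t, D t -> Peval r2 t <> 0 /\ Peval r1 t / Peval r2 t = f t).
  { intros t Dt.
    assert (H0 : Peval r1 t - f t * Peval r2 t = 0).
    { destruct (Req_dec (Peval r1 t - f t * Peval r2 t) 0) as [h|h]; auto. exfalso.
      set (c := Rabs (Peval r1 t - f t * Peval r2 t)).
      assert (hc : 0 < c) by (apply Rabs_pos_lt; auto).
      assert (Lh : limit1_in (fun x => Peval r1 x - f x * Peval r2 x) D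
                     (Peval r1 t - f t * Peval r2 t) t).
      { apply limit_minus; [apply cont_lim, Peval_cont|].
        apply limit_mul; [apply Fcont; auto|apply cont_lim, Peval_cont]. }
      destruct (lim_eps _ _ _ _ Lh c hc) as [a [Ha Hx]].
      destruct (avoid L t (Rmin (t + a) sigma)) as [x [hx nx]].
      { apply Rmin_glb_lt; unfold D in Dt; lra. }
      assert (x1 : x < t + a) by (pose proof (Rmin_l (t+a) sigma); lra).
      assert (x2 : x < sigma) by (pose proof (Rmin_r (t+a) sigma); lra).
      assert (Dx : D x) by (unfold D in *; lra).
      assert (fpos : 0 < f x).
      { rewrite <- f0. apply Finc; unfold D in *; lra. }
      rewrite (HL x nx) in fpos.
      assert (r2x : Peval r2 x <> 0).
      { intros e. rewrite e in fpos. unfold Rdiv in fpos. rewrite Rinv_0, Rmult_0_r in fpos. lra. }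
      specialize (Hx x Dx ltac:(rewrite Rabs_right; lra)).
      rewrite (HL x nx) in Hx.
      replace (Peval r1 x - Peval r1 x / Peval r2 x * Peval r2 x) with 0 in Hx by (field; auto).
      rewrite Rminus_0_l, Rabs_Ropp in Hx. unfold c in Hx. lra. }
    assert (r2t : Peval r2 t <> 0).
    { intros e. rewrite e in H0. specialize (Hb t). rewrite e in Hb.
      rewrite Rmult_0_r, Rminus_0_r in H0. rewrite H0 in Hb. lra. }
    split; auto. apply (Rmult_eq_reg_r (Peval r2 t)); auto. unfold Rdiv. rewrite Rmult_assoc, Rinv_l; auto. lra. }
  split; [exact P1|].
  destruct (Req_dec (Peval r2 sigma) 0) as [h|h]; auto. exfalso.
  assert (Cg : continuity_pt (fun x => Peval r1 x / Peval r2 x) sigma).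
  { apply (continuity_pt_div (Peval r1) (Peval r2)); auto; apply Peval_cont. }
  destruct (cont_eps _ _ Cg 1 ltac:(lra)) as [a [Ha Hx]].
  destruct (Funb (Rabs (Peval r1 sigma / Peval r2 sigma) + 1)) as [s0 [Ds0 Hs0]].
  set (x := Rmax s0 (sigma - a / 2)).
  assert (xa : s0 <= x) by apply Rmax_l. assert (xb : sigma - a/2 <= x) by apply Rmax_r.
  assert (xc : x < sigma) by (unfold x; apply Rmax_lub_lt; lra).
  assert (Dx : D x) by (unfold D; lra).
  assert (fx : f s0 <= f x).
  { destruct (Rle_lt_or_eq_dec _ _ xa) as [e|e]; [left; apply Finc; auto|rewrite e; lra]. }
  specialize (Hx x ltac:(rewrite Rabs_left; lra)).
  destruct (P1 x Dx) as [_ E]. rewrite E in Hx.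
  pose proof (Rle_abs (Peval r1 sigma / Peval r2 sigma)).
  apply Rabs_def2 in Hx. lra.
Qed.

Theorem mainTheorem9
  (n : nat) (a0 b0 c0 a1 b1 c1 Fbar Sbar : nat -> R)
  (Hn : (1 <= n)%nat)
  (Hpos : forall i, (1 <= i <= n)%nat ->
     0 < a0 i /\ 0 < b0 i /\ 0 < c0 i /\ 0 < a1 i /\ 0 < b1 i /\ 0 < c1 i /\
     0 < Fbar i /\ 0 < Sbar i)
  (r1 r2 : list R)
  (Hred : reduced_form (rfun a0 b0 c0 a1 b1 c1 Fbar Sbar n) r1 r2) :
  exists sigma : R,
    (0 < sigma /\ Peval r2 sigma = 0 /\
     forall t, 0 < t < sigma -> Peval r2 t <> 0) /\
    (forall s, 0 <= s < sigma ->
       continuity_pt (fun x => Peval r1 x / Peval r2 x) s) /\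
    (forall x y, 0 <= x -> x < y -> y < sigma ->
       Peval r1 x / Peval r2 x < Peval r1 y / Peval r2 y) /\
    Peval r1 0 / Peval r2 0 = 0 /\
    (forall M : R, exists eta : R, 0 < eta /\
       forall s, sigma - eta < s < sigma -> M < Peval r1 s / Peval r2 s) /\
    (forall Ebar : R, 0 < Ebar -> forall s : R,
       (0 <= s < sigma /\ Peval r1 s / Peval r2 s = Ebar) <->
       exists S0 S1 F Y0 Y1 : nat -> R,
         BMSS a0 b0 c0 a1 b1 c1 Fbar Sbar n Ebar S0 S1 F Y0 Y1 /\ S1 n = s).
Proof.
  destruct (sigma_ex a0 b0 c0 a1 b1 c1 Fbar Sbar n Hpos Hn) as [sigma [hs Hch]].
  destruct (rfun_props a0 b0 c0 a1 b1 c1 Fbar Sbar n Hpos) as (R0&Rinc&Rcont&Runb).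
  set (f := rfun a0 b0 c0 a1 b1 c1 Fbar Sbar n) in *.
  assert (Finc : forall s t, 0 <= s < sigma -> 0 <= t < sigma -> s < t -> f s < f t).
  { intros s t h1 h2 h3. apply Rinc; auto; apply Hch; auto. }
  assert (Fcont : forall s, 0 <= s < sigma -> limit1_in f (fun x => 0 <= x < sigma) (f s) s).
  { intros s h. apply lim_sub with (D := Dom a0 b0 c0 a1 b1 c1 Fbar Sbar n n).
    - intros x hx. apply Hch; auto.
    - apply Rcont. apply Hch; auto. }
  assert (Funb : forall M, exists s, 0 <= s < sigma /\ M < f s).
  { intros M. destruct (Runb M) as [s [Ds h]]. exists s; split; auto. apply Hch; auto. }
  destruct (poly_part f sigma r1 r2 hs R0 Finc Fcont Funb Hred) as [P1 P2].
  exists sigma. split; [split; [auto|split; [auto|]]|].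
  { intros t ht. apply P1; lra. }
  split.
  { intros s h. destruct (P1 s h) as [h2 _].
    apply (continuity_pt_div (Peval r1) (Peval r2)); auto; apply Peval_cont. }
  split.
  { intros x y h1 h2 h3. rewrite (proj2 (P1 x ltac:(lra))), (proj2 (P1 y ltac:(lra))).
    apply Finc; lra. }
  split.
  { rewrite (proj2 (P1 0 ltac:(lra))). auto. }
  split.
  { intros M. destruct (Funb M) as [s0 [h0 hM]]. exists (sigma - s0). split; [lra|].
    intros s hs'. rewrite (proj2 (P1 s ltac:(lra))).
    assert (f s0 < f s) by (apply Finc; lra). lra. }
  intros Ebar HE s. split.
  - intros [h1 h2]. rewrite (proj2 (P1 s h1)) in h2.
    apply bmss_from; auto. apply Hch; auto.
  - intros (S0 & S1 & F & Y0 & Y1 & HB & HS). subst s.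
    destruct (bmss_to a0 b0 c0 a1 b1 c1 Fbar Sbar n Hpos Hn Ebar HE S0 S1 F Y0 Y1 HB) as [hD hr].
    apply Hch in hD. split; auto. rewrite (proj2 (P1 _ hD)). auto.
Qed.
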